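(* (a) There are absolute constants $c_1,c_2>0$ such that for all integers $m,n\ge 2$, $$c_1(m+n)\le \mathrm{bdim}(P_m\times P_n)\le c_2(m+n).$$ (b) For each integer $d\ge2$ there are constants $c_1(d),c_2(d)>0$ such that for all integers $n_1,\dots,n_d\ge2$, $$c_1(d)\sum_{i=1}^d n_i\le \mathrm{bdim}\Big(\prod_{i=1}^d P_{n_i}\Big)\le c_2(d)\sum_{i=1}^d n_i.$$
   Context: $P_m\times P_n$ denotes the Cartesian product of paths (the grid graph), and $\prod_{i=1}^d P_{n_i}$ the $d$-dimensional grid (iterated Cartesian product). $d(x,y)$ denotes graph distance. For an integer $k\ge1$ let $d_k(x,y)=\min\{d(x,y),k+1\}$. A function $f:V(G)\to\mathbb{Z}_{\ge 0}$ is a resolving broadcast of $G$ if for all distinct $x,y\in V(G)$ there is $z\in V(G)$ with $f(z)=i>0$ and $d_i(x,z)\ne d_i(y,z)$. The broadcast dimension $\mathrm{bdim}(G)$ is the minimum of $\sum_{v\in V(G)}f(v)$ over all resolving broadcasts $f$ of $G$. *)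

(* Defs.v *)
From mathcomp Require Import all_boot all_order all_algebra.
Set Implicit Arguments. Unset Strict Implicit. Unset Printing Implicit Defensive.

Section GraphDist.
Variables (T : finType) (e : rel T).

Fixpoint walk (k : nat) (x y : T) : bool :=
  if k is k'.+1 then [exists z, e x z && walk k' z y] else x == y.

(* Graph distance: the least j with a walk of length j from x to y
   (a shortest walk is a path, so j < #|T| when y is reachable).
   If y is unreachable the value #|T| is returned; this never happens in the
   (connected) grids considered below. *)
Definition dist (x y : T) : nat := find (fun j => walk j x y) (iota 0 #|T|).

Definition dist_k (k : nat) (x y : T) : nat := minn (dist x y) k.+1.

Definition resolving_broadcast (f : T -> nat) : bool :=
  [forall x, forall y, (x != y) ==>
     [exists z, (0 < f z) && (dist_k (f z) x z != dist_k (f z) y z)]].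

(* There is a resolving broadcast of total cost n.  A broadcast of cost n
   takes values in {0,...,n}, so it can be represented by f : T -> 'I_n.+1
   without loss of generality. *)
Definition has_resolving_broadcast_of_cost (n : nat) : bool :=
  [exists f : {ffun T -> 'I_n.+1},
     resolving_broadcast (fun v => nat_of_ord (f v)) &&
     (\sum_(v : T) (f v : nat) == n)].

Lemma has_resolving_broadcast_exists :
  exists n, has_resolving_broadcast_of_cost n.
Proof.
exists #|T|.
case: (posnP #|T|) => [T0 | Tpos].
  apply/existsP; exists [ffun=> ord0]; apply/andP; split.
    apply/forallP => x; have := card0_eq T0 x; by rewrite inE.
  by rewrite big1 ?T0 // => v _; rewrite ffunE.
apply/existsP; exists [ffun=> (inord 1 : 'I_#|T|.+1)].
have v1 : (inord 1 : 'I_#|T|.+1) = 1 :> nat by rewrite inordK // ltnS.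
apply/andP; split; last first.
  rewrite (eq_bigr (fun=> 1)); last by move=> v _; rewrite ffunE v1.
  by rewrite sum1_card.
apply/forallP => x; apply/forallP => y; apply/implyP => nxy.
apply/existsP; exists x; rewrite ffunE v1 /=.
have Hxx : dist x x = 0.
  rewrite /dist; move: Tpos; case: (#|T|) => [|k] //= _; by rewrite eqxx.
have Hyx : 0 < dist y x.
  rewrite /dist; move: Tpos; case: (#|T|) => [|k] //= _; by rewrite eq_sym (negbTE nxy).
rewrite /dist_k Hxx min0n; apply/eqP => H.
move: Hyx H; case: (dist y x) => [|k] //= _; by rewrite /minn; case: ifP.
Qed.

Definition bdim : nat := ex_minn has_resolving_broadcast_exists.

End GraphDist.

Definition path_adj (n : nat) : rel 'I_n :=
  fun a b => (a.+1 == b :> nat) || (b.+1 == a :> nat).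

Definition cart_adj (T1 T2 : finType) (e1 : rel T1) (e2 : rel T2) : rel (T1 * T2) :=
  fun u v => (e1 u.1 v.1 && (u.2 == v.2)) || ((u.1 == v.1) && e2 u.2 v.2).

Definition grid2_adj (m n : nat) : rel ('I_m * 'I_n) :=
  cart_adj (@path_adj m) (@path_adj n).

(* The d-dimensional grid prod_{i<d} P_{n_i}: vertices are tuples
   (x_0,...,x_{d-1}) with x_i in {0,...,n_i - 1}; two vertices are adjacent
   iff they differ in exactly one coordinate, in which they are adjacent in
   the corresponding path (the iterated Cartesian product of paths). *)
Definition gridv (d : nat) (n : 'I_d -> nat) : finType :=
  {dffun forall i : 'I_d, 'I_(n i)}.

Definition grid_adj (d : nat) (n : 'I_d -> nat) : rel (gridv n) :=
  fun x y => [exists i : 'I_d, path_adj (x i) (y i) &&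
                [forall j : 'I_d, (j != i) ==> (x j == y j)]].

Arguments path_adj n : clear implicits.
Arguments grid2_adj m n : clear implicits.
Arguments gridv d n : clear implicits.
Arguments grid_adj d n : clear implicits.

(* Main.v *)
Require Import Defs.
From mathcomp Require Import all_boot all_order all_algebra zify.

Section Gen.
Variables (T : finType) (e : rel T).

Lemma bdim_has : has_resolving_broadcast_of_cost e (bdim e).
Proof. by rewrite /bdim; case: ex_minnP. Qed.

Lemma bdim_le C : has_resolving_broadcast_of_cost e C -> bdim e <= C.
Proof. by rewrite /bdim; case: ex_minnP => m _ H /H. Qed.

Lemma resolving_ext (f g : T -> nat) : (forall v, f v = g v) ->
  resolving_broadcast e f = resolving_broadcast e g.
Proof.
move=> H; apply: eq_forallb => x; apply: eq_forallb => y; congr (_ ==> _).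
by apply: eq_existsb => z; rewrite H.
Qed.

Lemma bdim_set (S : {set T}) D z0 : z0 \in S -> 0 < D ->
  resolving_broadcast e (fun z => if z \in S then D else 0) -> bdim e <= D * #|S|.
Proof.
move=> z0S D0 Hres; apply: bdim_le.
have DC : D <= D * #|S|.
  have S0 : 0 < #|S| by apply/card_gt0P; exists z0.
  by rewrite -{1}(muln1 D) leq_mul2l S0 orbT.
apply/existsP; exists [ffun v => inord (if v \in S then D else 0) : 'I_(D * #|S|).+1].
have E : forall v, ([ffun v => inord (if v \in S then D else 0) : 'I_(D * #|S|).+1] v : nat)
     = if v \in S then D else 0.
  move=> v; rewrite ffunE inordK //; case: ifP => _ //; by rewrite ltnS.
apply/andP; split.
  by rewrite (@resolving_ext _ (fun z => if z \in S then D else 0) E).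
rewrite (eq_bigr _ (fun v _ => E v)) -big_mkcond /= sum_nat_const mulnC.
by [].
Qed.

Lemma walk_p (p : T -> nat) :
  (forall x y, e x y -> p x <= p y + 1 /\ p y <= p x + 1) ->
  forall k x y, walk e k x y -> p x <= p y + k /\ p y <= p x + k.
Proof.
move=> Hp; elim=> [|k IH] x y /=.
  by move/eqP=> ->; rewrite addn0.
case/existsP=> z /andP[/Hp [h1 h2] /IH [h3 h4]]; lia.
Qed.

Lemma dist_p (p : T -> nat) N :
  (forall x y, e x y -> p x <= p y + 1 /\ p y <= p x + 1) ->
  (forall x, p x < N) -> N <= #|T| ->
  forall x y, p x <= p y + dist e x y /\ p y <= p x + dist e x y.
Proof.
move=> Hp HN NT x y; rewrite /dist.
set P := (fun j => walk e j x y).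
case: (boolP (has P (iota 0 #|T|))) => H.
  have := nth_find 0 H; rewrite nth_iota ?add0n; last by rewrite -{2}(size_iota 0 #|T|) -has_find.
  exact: walk_p.
rewrite (hasNfind H) size_iota; have := HN x; have := HN y; lia.
Qed.

Lemma dist_L (L : T -> T -> nat) :
  (forall x, L x x = 0) ->
  (forall x z y, e x z -> L x y <= L z y + 1) ->
  (forall x y k, L x y = k.+1 -> exists z, e x z && (L z y == k)) ->
  (forall x y, L x y = 0 -> x = y) ->
  (forall x y, L x y < #|T|) ->
  forall x y, dist e x y = L x y.
Proof.
move=> U0 U1 U2 U3 U4.
have Wle : forall k x y, walk e k x y -> L x y <= k.
  elim=> [|k IH] x y /=; first by move/eqP=> ->; rewrite U0.
  case/existsP=> z /andP[/U1 h /IH h2]; have := h y; lia.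
have Wex : forall k x y, L x y = k -> walk e k x y.
  elim=> [|k IH] x y /=.
    by move/U3=> ->.
  move/U2=> [z /andP[exz /eqP Lz]]; apply/existsP; exists z; rewrite exz /=.
  exact: IH.
move=> x y; rewrite /dist; set P := (fun j => walk e j x y).
have HL : P (L x y) by exact: Wex.
have Hs : L x y < size (iota 0 #|T|) by rewrite size_iota.
case: (ltngtP (find P (iota 0 #|T|)) (L x y)) => // H.
  have Hh : has P (iota 0 #|T|) by rewrite has_find; exact: ltn_trans H Hs.
  have := nth_find 0 Hh; rewrite nth_iota ?add0n; last exact: ltn_trans H (U4 x y).
  move/Wle; lia.
have := before_find 0 H; rewrite nth_iota // add0n; by move/negP.
Qed.

Lemma card_bigcup_le (N : nat) (P : pred T) (W : T -> {set 'I_N}) :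
  #|\bigcup_(z | P z) W z| <= \sum_(z | P z) #|W z|.
Proof.
apply: (big_ind2 (fun (a : {set 'I_N}) b => #|a| <= b)) => //.
  by rewrite cards0.
move=> a1 b1 a2 b2 h1 h2; rewrite cardsU; lia.
Qed.

Lemma lower N (p : T -> nat) (g : 'I_N -> T) :
  (forall x y, e x y -> p x <= p y + 1 /\ p y <= p x + 1) ->
  (forall x, p x < N) -> (forall t, p (g t) = t) ->
  forall C, has_resolving_broadcast_of_cost e C -> N <= 3 * C + 1.
Proof.
move=> Hp HN Hg C.
have ginj : injective g by move=> t1 t2 /(congr1 p); rewrite !Hg => /val_inj.
have NT : N <= #|T| by have := leq_card g ginj; rewrite card_ord.
have Dp := @dist_p p N Hp HN NT.
case/existsP => f /andP[Hr /eqP HC].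
pose F := fun v => nat_of_ord (f v).
pose W := fun z => [set t : 'I_N | dist e (g t) z <= F z].
pose A := \bigcup_(z | 0 < F z) W z.
have Hc : #|~: A| <= 1.
  apply/card_le1_eqP => t1 t2; rewrite !inE => h1 h2.
  apply/eqP; apply/negPn/negP => neq.
  have ng : g t1 != g t2 by apply: contra neq => /eqP /ginj ->.
  move: Hr => /forallP /(_ (g t1)) /forallP /(_ (g t2)); rewrite ng /=.
  case/existsP => z /andP[Fz].
  have d1 : F z < dist e (g t1) z.
    rewrite ltnNge; apply/negP => hd; move/bigcupP: h1; apply; exists z => //.
    by rewrite inE.
  have d2 : F z < dist e (g t2) z.
    rewrite ltnNge; apply/negP => hd; move/bigcupP: h2; apply; exists z => //.
    by rewrite inE.
  rewrite /dist_k; move: d1 d2; rewrite /F; move: (dist e (g t1) z) (dist e (g t2) z) (nat_of_ord (f z)) => a b c d1 d2; move/eqP; apply; rewrite /minn; case: ifP; case: ifP; lia.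
have HW : forall z, #|W z| <= (F z).*2.+1.
  move=> z.
  pose h := fun t : 'I_N => (inord (t + F z - p z) : 'I_(F z).*2.+1).
  rewrite -[X in _ <= X](card_ord (F z).*2.+1).
  apply: (@leq_card_in _ _ h) => t1 t2; rewrite !inE => h1 h2.
  have := Dp (g t1) z; have := Dp (g t2) z; rewrite !Hg.
  move=> [a1 a2] [b1 b2] /(congr1 val); rewrite /h /= !inordK; last 2 first.
    move: a1 a2 h2 b1 b2 h1; rewrite /F; lia.
    move: a1 a2 h2 b1 b2 h1; rewrite /F; lia.
  move=> E; apply: ord_inj; move: a1 a2 h2 b1 b2 h1 E; rewrite /F; lia.
have HA : #|A| <= \sum_(z | 0 < F z) (F z).*2.+1.
  apply: leq_trans (@card_bigcup_le N (fun z => 0 < F z) W) _; exact: leq_sum.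
have HS : \sum_(z | 0 < F z) (F z).*2.+1 <= 3 * C.
  rewrite -HC big_distrr /= big_mkcond /=; apply: leq_sum => z _.
  rewrite /F; case: ifP => /=; lia.
have := cardsC A; rewrite card_ord => <-; lia.
Qed.
End Gen.
Set Implicit Arguments. Unset Strict Implicit.

Definition ad (a b : nat) := (a - b) + (b - a).

Lemma path_adjP k (a b : 'I_k) : path_adj k a b -> (a <= b + 1) && (b <= a + 1) && (a != b :> nat).
Proof. by rewrite /path_adj => /orP[] /eqP; lia. Qed.

Definition stpn (a b : nat) := if a < b then a.+1 else a.-1.

Definition stp k (a b : 'I_k) : 'I_k := insubd a (stpn a b).

Lemma stpE k (a b : 'I_k) : val (stp a b) = stpn a b.
Proof.
rewrite val_insubd /stpn; case: ifP => // /negP H; exfalso; apply: H.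
have := ltn_ord a; have := ltn_ord b; case: ifP; lia.
Qed.

Lemma ad_lt k (a b : 'I_k) : ad a b < k.
Proof. have := ltn_ord a; have := ltn_ord b; rewrite /ad; lia. Qed.

Lemma resolve_gen (T : finType) (e : rel T) (S : {set T}) D (L : T -> T -> nat) O :
  (forall x y, dist e x y = L x y) -> (forall x y, L x y <= D) -> 0 < D -> O \in S ->
  (forall x y, x != y -> L x O = L y O -> exists2 v, v \in S & L x v != L y v) ->
  resolving_broadcast e (fun z => if z \in S then D else 0).
Proof.
move=> Hd HL D0 OS H.
apply/forallP => x; apply/forallP => y; apply/implyP => nxy; apply/existsP.
have dk : forall a b, dist_k e D a b = L a b.
  by move=> a b; rewrite /dist_k Hd; apply/minn_idPl; exact: leq_trans (HL a b) (leqnSn D).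
case: (eqVneq (L x O) (L y O)) => h.
  by case: (H x y nxy h) => v vS hv; exists v; rewrite vS D0 /= !dk hv.
by exists O; rewrite OS D0 /= !dk h.
Qed.

Section Two.
Variables (m n : nat) (hm : 2 <= m) (hn : 2 <= n).
Let om : 'I_m := Ordinal (leq_trans (isT : 0 < 2) hm).
Let on : 'I_n := Ordinal (leq_trans (isT : 0 < 2) hn).
Let tm : 'I_m := @Ordinal m m.-1 (ltac:(rewrite ltn_predL; exact: leq_trans (isT : 0 < 2) hm)).

Definition L2 (x y : 'I_m * 'I_n) := ad x.1 y.1 + ad x.2 y.2.

Lemma adj2 (x z : 'I_m * 'I_n) : grid2_adj m n x z ->
  ((x.1 <= z.1 + 1) && (z.1 <= x.1 + 1) && (x.1 != z.1 :> nat) && (x.2 == z.2 :> nat)) ||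
  ((x.2 <= z.2 + 1) && (z.2 <= x.2 + 1) && (x.2 != z.2 :> nat) && (x.1 == z.1 :> nat)).
Proof.
rewrite /grid2_adj /cart_adj => /orP[/andP[/path_adjP -> /eqP ->]|/andP[/eqP -> /path_adjP ->]] //=.
  by rewrite eqxx.
by rewrite eqxx orbT.
Qed.

Lemma dist2 x y : dist (grid2_adj m n) x y = L2 x y.
Proof.
apply: dist_L => {x y}.
- by move=> x; rewrite /L2 /ad; lia.
- move=> x z y /adj2; rewrite /L2 /ad; lia.
- move=> [x1 x2] [y1 y2] k; rewrite /L2 /=.
  case: (eqVneq (x1 : nat) y1) => h1 E.
    exists (x1, stp x2 y2); rewrite /grid2_adj /cart_adj /= eqxx /path_adj stpE /stpn /=.
    move: E; rewrite /ad; case: ifP; lia.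
  exists (stp x1 y1, x2); rewrite /grid2_adj /cart_adj /= eqxx /path_adj stpE /stpn /=.
  move: E; rewrite /ad; case: ifP; lia.
- move=> [x1 x2] [y1 y2]; rewrite /L2 /ad /= => E.
  by congr pair; apply: ord_inj; lia.
- move=> [x1 x2] [y1 y2]; rewrite card_prod !card_ord /L2 /=.
  have : m + n <= m * n by clear -hm hn; nia.
  have := ad_lt x1 y1; have := ad_lt x2 y2; lia.
Qed.

Lemma bdim2_upper : bdim (grid2_adj m n) <= 2 * (m + n).
Proof.
have D0 : 0 < m.-1 + n.-1 by lia.
apply: leq_trans (@bdim_set _ _ [set (om, on); (tm, on)] (m.-1 + n.-1) (om, on) (setU11 _ _) D0 _) _.
  apply: (@resolve_gen _ _ _ _ L2 (om, on)).
  - exact: dist2.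
  - move=> [x1 x2] [y1 y2]; rewrite /L2 /=; have := ad_lt x1 y1; have := ad_lt x2 y2; lia.
  - exact: D0.
  - by rewrite setU11.
  - move=> [x1 x2] [y1 y2] nxy h; exists (tm, on); first by rewrite !inE eqxx orbT.
    apply: contra nxy => /eqP h1; move: h h1; rewrite /L2 /ad /=.
    have := ltn_ord x1; have := ltn_ord y1; have := ltn_ord x2; have := ltn_ord y2.
    move=> a b c d E1 E2; apply/eqP; congr pair; apply: ord_inj; lia.
rewrite cards2; case: (_ != _); lia.
Qed.

Lemma bdim2_lower : m + n <= 12 * bdim (grid2_adj m n).
Proof.
have Hb := @bdim_has _ (grid2_adj m n).
have h1 : m <= 3 * bdim (grid2_adj m n) + 1.
  apply: (@lower _ _ m (fun x => nat_of_ord x.1) (fun t => (t, on)) _ _ _ _ Hb).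
  - by move=> [x1 x2] [z1 z2] /adj2 /=; lia.
  - by move=> x; exact: ltn_ord.
  - by [].
have h2 : n <= 3 * bdim (grid2_adj m n) + 1.
  apply: (@lower _ _ n (fun x => nat_of_ord x.2) (fun t => (om, t)) _ _ _ _ Hb).
  - by move=> [x1 x2] [z1 z2] /adj2 /=; lia.
  - by move=> x; exact: ltn_ord.
  - by [].
lia.
Qed.
End Two.
Set Implicit Arguments. Unset Strict Implicit.

Section D.
Variables (d : nat) (n : 'I_d -> nat) (hn : forall i, 2 <= n i).
Let o j : 'I_(n j) := Ordinal (leq_trans (isT : 0 < 2) (hn j)).

Definition pt (a : 'I_d -> nat) : gridv d n := [ffun j => insubd (o j) (a j)].

Lemma ptE a j : a j < n j -> val (pt a j) = a j.
Proof. by move=> h; rewrite /pt ffunE val_insubd h. Qed.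

Definition LD (x y : gridv d n) := \sum_(j < d) ad (x j) (y j).

Lemma cardT : #|gridv d n| = \prod_(i < d) n i.
Proof. rewrite card_dep_ffun foldrE big_map big_enum /=. by apply: eq_bigr => i _; rewrite card_ord. Qed.


Lemma adjD (x z : gridv d n) : grid_adj d n x z ->
  exists i, path_adj _ (x i) (z i) /\ forall j, j != i -> x j = z j.
Proof.
case/existsP => i /andP[h /forallP H]; exists i; split => // j ji.
by move: (H j); rewrite ji => /eqP.
Qed.

Lemma LD_split (x y : gridv d n) i :
  LD x y = ad (x i) (y i) + \sum_(j < d | j != i) ad (x j) (y j).
Proof. by rewrite /LD (bigD1 i). Qed.

Lemma sum_pred_lt (e : nat) (m : 'I_e -> nat) : (forall i, 0 < m i) ->
  \sum_(i < e) (m i).-1 < \prod_(i < e) m i.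
Proof.
elim: e m => [|e IH] m hm; first by rewrite big_ord0 big_ord0.
rewrite big_ord_recr big_ord_recr /=.
have := IH (fun i => m (widen_ord (leqnSn e) i)) (fun i => hm _).
have := hm ord_max.
move: (\sum_(i < e) (m (widen_ord (leqnSn e) i)).-1) (\prod_(i < e) m (widen_ord (leqnSn e) i)) (m ord_max).
move=> a b c; nia.
Qed.

Lemma adj_step (a b c R : nat) : (a <= b + 1) && (b <= a + 1) && (a != b) ->
  ad a c + R <= ad b c + R + 1.
Proof. rewrite /ad; lia. Qed.

Lemma stp_step (a b R k : nat) : a != b ->
  ad a b + R = k.+1 -> ad (stpn a b) b + R == k.
Proof. rewrite /ad /stpn; case: ifP; lia. Qed.

Lemma distD x y : dist (grid_adj d n) x y = LD x y.
Proof.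
apply: dist_L => {x y}.
- by move=> x; rewrite /LD big1 // => j _; rewrite /ad; lia.
- move=> x z y /adjD [i [/path_adjP h H]]; rewrite !(LD_split _ _ i).
  rewrite (eq_bigr (fun j => ad (z j) (y j))); last by move=> j /H ->.
  by apply: adj_step.
- move=> x y k E.
  case: (pickP (fun i => (x i : nat) != y i)) => [i hi|H]; last first.
    move: E; rewrite /LD big1 // => j _; move: (H j) => /= /negbFE /eqP ->; rewrite /ad; lia.
  pose z := pt (fun j => if j == i then stpn (x j) (y j) else x j).
  have zv : forall j, nat_of_ord (z j) = if j == i then stpn (x j) (y j) else x j.
    move=> j; rewrite ptE //; case: ifP => _; last exact: ltn_ord.
    have := ltn_ord (x j); have := ltn_ord (y j); rewrite /stpn; case: ifP; lia.
  exists z; apply/andP; split.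
    apply/existsP; exists i; apply/andP; split.
      by rewrite /path_adj zv eqxx /stpn; move: hi; case: ifP; lia.
    apply/forallP => j; apply/implyP => ji; apply/eqP; apply: ord_inj.
    by rewrite zv (negbTE ji).
  move: E; rewrite !(LD_split _ _ i).
  rewrite [X in _ -> _ + X == _](eq_bigr (fun j => ad (x j) (y j))); last first.
    by move=> j ji; rewrite zv (negbTE ji).
  rewrite zv eqxx; apply: stp_step; exact: hi.
- move=> x y E; apply/ffunP => j; apply: ord_inj; move: E; rewrite (LD_split _ _ j) /ad; lia.
- move=> x y; rewrite cardT; apply: leq_ltn_trans (sum_pred_lt (fun i => leq_trans (isT : 0 < 2) (hn i))).
  apply: leq_sum => j _; have := ad_lt (x j) (y j); lia.
Qed.

Lemma bdimD_lower i : n i <= 3 * bdim (grid_adj d n) + 1.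
Proof.
have Hb := @bdim_has _ (grid_adj d n).
pose g := fun t : 'I_(n i) => pt (fun j => if j == i then nat_of_ord t else 0).
apply: (@lower _ (grid_adj d n) (n i) (fun x : gridv d n => nat_of_ord (x i)) g _ _ _ _ Hb).
- move=> x y /adjD [i0 [h H]]; case: (eqVneq i0 i) h => [-> h|ne h].
    by move/path_adjP: h; lia.
  by rewrite eq_sym in ne; rewrite (H i ne); lia.
- by move=> x; exact: ltn_ord.
- by move=> t; rewrite /g ptE eqxx // ltn_ord.
Qed.

Lemma two_eq (a b N Ra Rb : nat) : a < N -> b < N ->
  ad a 0 + Ra = ad b 0 + Rb -> ad a N.-1 + Ra = ad b N.-1 + Rb -> a = b.
Proof. rewrite /ad; lia. Qed.

Lemma bdimD_upper (hd : 0 < d) : bdim (grid_adj d n) <= d.+1 * \sum_(i < d) n i.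
Proof.
pose O := pt (fun _ => 0).
pose v := fun i => pt (fun j => if j == i then (n i).-1 else 0).
pose D := \sum_(j < d) (n j).-1.
pose S := O |: [set v i | i : 'I_d].
have D0 : 0 < D.
  rewrite /D (bigD1 (Ordinal hd)) //=; have := hn (Ordinal hd); lia.
have Oval : forall j, nat_of_ord (O j) = 0.
  by move=> j; rewrite ptE //; have := hn j; lia.
have vval : forall i j, nat_of_ord (v i j) = if j == i then (n i).-1 else 0.
  move=> i j; rewrite ptE //; case: eqP => [->|_]; have := hn j; have := hn i; lia.
apply: leq_trans (@bdim_set _ _ S D O (setU11 _ _) D0 _) _.
  apply: (@resolve_gen _ _ _ _ (@LD) O).
  - exact: distD.
  - move=> x y; apply: leq_sum => j _; have := ad_lt (x j) (y j); lia.
  - exact: D0.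
  - exact: setU11.
  - move=> x y nxy h.
    case: (pickP (fun i => (x i : nat) != y i)) => [i hi|H]; last first.
      exfalso; move/negP: nxy; apply; apply/eqP/ffunP => j; apply: ord_inj.
      by move: (H j) => /= /negbFE /eqP.
    exists (v i).
      by rewrite in_setU1; apply/orP; right; apply/imsetP; exists i.
    apply: contra hi => /eqP h2; apply/eqP.
    move: h h2; rewrite !(LD_split _ _ i).
    rewrite [X in _ + X = _ -> _](eq_bigr (fun j => ad (x j) (v i j))); last first.
      by move=> j ji; rewrite Oval vval (negbTE ji).
    rewrite [X in _ = _ + X -> _](eq_bigr (fun j => ad (y j) (v i j))); last first.
      by move=> j ji; rewrite Oval vval (negbTE ji).
    rewrite !Oval !vval eqxx.
    exact: two_eq (ltn_ord (x i)) (ltn_ord (y i)).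
have cS : #|S| <= d.+1.
  rewrite cardsU1.
  have h1 : #|[set v i | i : 'I_d]| <= d.
    by apply: leq_trans (leq_imset_card _ _) _; rewrite -[X in _ <= X](card_ord d) max_card.
  case: (_ \notin _); rewrite /= ?add0n ?add1n.
  - exact: h1.
  - exact: leq_trans h1 (leqnSn _).
have cD : D <= \sum_(i < d) n i by apply: leq_sum => j _; exact: leq_pred.
by rewrite mulnC; apply: leq_mul.
Qed.
End D.
Import Order.TTheory GRing.Theory Num.Theory.

Lemma sumD_lower d (n : 'I_d -> nat) (hn : forall i, 2 <= n i) :
  \sum_(i < d) n i <= 6 * d * bdim (grid_adj d n).
Proof.
have h1 : \sum_(i < d) n i <= \sum_(i < d) (3 * bdim (grid_adj d n) + 1).
  by apply: leq_sum => i _; exact: bdimD_lower.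
have h2 : \sum_(i < d) 2 <= \sum_(i < d) n i by apply: leq_sum => i _; exact: hn.
move: h1 h2; rewrite !sum_nat_const card_ord.
move: (\sum_(i < d) n i) (bdim (grid_adj d n)) => s b; nia.
Qed.

Local Open Scope ring_scope.

Theorem corollary5p3 :
  (exists c1 c2 : rat, 0 < c1 /\ 0 < c2 /\
     forall m n : nat, (2 <= m)%N -> (2 <= n)%N ->
       c1 * (m + n)%:R <= (bdim (grid2_adj m n))%:R /\
       (bdim (grid2_adj m n))%:R <= c2 * (m + n)%:R)
  /\
  (forall d : nat, (2 <= d)%N ->
     exists c1 c2 : rat, 0 < c1 /\ 0 < c2 /\
       forall n : 'I_d -> nat, (forall i, (2 <= n i)%N) ->
         c1 * (\sum_(i < d) n i)%:R <= (bdim (grid_adj d n))%:R /\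
         (bdim (grid_adj d n))%:R <= c2 * (\sum_(i < d) n i)%:R).
Proof.
split.
  exists (12%:R)^-1, 2%:R; split; first by rewrite invr_gt0 ltr0n.
  split; first by rewrite ltr0n.
  move=> m n hm hn; split.
    by rewrite ler_pdivrMl ?ltr0n // -natrM ler_nat; exact: bdim2_lower.
  by rewrite -natrM ler_nat; exact: bdim2_upper.
move=> d hd; exists ((6 * d)%:R)^-1, (d.+1)%:R.
have d0 : (0 < 6 * d)%N by lia.
split; first by rewrite invr_gt0 ltr0n.
split; first by rewrite ltr0n.
move=> n hn; split.
  by rewrite ler_pdivrMl ?ltr0n // -natrM ler_nat; exact: sumD_lower.
rewrite -natrM ler_nat; apply: bdimD_upper => //; lia.
Qed.
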